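(* Let $d\geq1$, let $\hat\rho$ be a $d\times d$ density operator with eigenvalues $\hat r_1,\dots,\hat r_d$ and eigenvalue decomposition $\hat\rho=\sum_i\hat r_i|b_i\rangle\!\langle b_i|$, and fix $p_\rho>0$. Then the problem maximize $\sum_{i=1}^d\hat r_is_i+p_\rho\sqrt{1-\sum_{i=1}^ds_i^2}$ over $(s_1,\dots,s_d)\in\mathbb R^d$ subject to $\sum_{i=1}^ds_i=1$ and $\sum_{i=1}^ds_i^2\leq1$ has a unique solution. Its optimal value is $$\frac1d\left(1+\sqrt{d-1}\sqrt{d\big(p_\rho^2+\mathrm{Tr}(\hat\rho^2)\big)-1}\right),$$ and the optimal array is $s_i^\sharp=\frac1d+c\,(\hat r_i-\frac1d)$ with $c=\sqrt{\frac{d-1}{d(p_\rho^2+\mathrm{Tr}(\hat\rho^2))-1}}$, i.e. it corresponds to the matrix $$\sigma^\sharp=\sum_i s_i^\sharp|b_i\rangle\!\langle b_i|=\frac1d\mathbb 1+\sqrt{\frac{d-1}{d(p_\rho^2+\mathrm{Tr}(\hat\rho^2))-1}}\Big(\hat\rho-\frac1d\mathbb 1\Big).$$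
   Context: $\mathbb 1$ denotes the $d\times d$ identity matrix. *)

(* Defs.v *)
From HB Require Import structures.
From mathcomp Require Import all_boot all_order all_algebra.
From mathcomp Require Import complex.
Set Implicit Arguments. Unset Strict Implicit. Unset Printing Implicit Defensive.
Import Order.TTheory GRing.Theory Num.Theory.
Local Open Scope ring_scope.

Definition adjmx (R : rcfType) m n (A : 'M[R[i]]_(m, n)) : 'M[R[i]]_(n, m) :=
  (map_mx (@conjc R) A)^T.

Definition density (R : rcfType) d (rho : 'M[R[i]]_d) : Prop :=
  [/\ adjmx rho = rho,
      (forall v : 'cV[R[i]]_d, 0 <= (adjmx v *m rho *m v) 0 0)
    & \tr rho = 1].

Definition objective (R : rcfType) d (r : 'I_d -> R) (p : R) (s : 'rV[R]_d) : R :=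
  \sum_i r i * s 0 i + p * Num.sqrt (1 - \sum_i s 0 i ^+ 2).

Definition feasible (R : rcfType) d (s : 'rV[R]_d) : Prop :=
  \sum_i s 0 i = 1 /\ \sum_i s 0 i ^+ 2 <= 1.

(* Main.v *)
Require Import Defs.
From HB Require Import structures.
From mathcomp Require Import all_boot all_order all_algebra.
From mathcomp Require Import complex.
From mathcomp Require Import ring lra.
Import Order.TTheory GRing.Theory Num.Theory.
Local Open Scope ring_scope.
Set Implicit Arguments. Unset Strict Implicit.

Lemma sq_exp (R : rcfType) d (a b : R) (f g : 'I_d -> R) :
  \sum_i (a * f i + b * g i) ^+ 2 =
  a ^+ 2 * \sum_i f i ^+ 2 + 2 * a * b * \sum_i f i * g i + b ^+ 2 * \sum_i g i ^+ 2.
Proof.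
rewrite !mulr_sumr -!big_split /=; apply: eq_bigr => i _; ring.
Qed.

Lemma shift_sum (R : rcfType) d (f g : 'I_d -> R) : (0 < d)%N ->
  \sum_i f i = 1 -> \sum_i g i = 1 ->
  \sum_i f i * g i = d%:R^-1 + \sum_i (f i - d%:R^-1) * (g i - d%:R^-1).
Proof.
move=> d0 sf sg.
have -> : \sum_i (f i - d%:R^-1) * (g i - d%:R^-1) =
  \sum_i (f i * g i) - d%:R^-1 * \sum_i f i - d%:R^-1 * \sum_i g i
   + \sum_(i < d) (d%:R^-1 * d%:R^-1 : R).
  rewrite !mulr_sumr -!sumrB -big_split /=; apply: eq_bigr => i _; ring.
rewrite sf sg sumr_const card_ord -(mulr_natr (d%:R^-1 * d%:R^-1)).
have n0 : (d%:R : R) != 0 by rewrite pnatr_eq0 -lt0n.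
by field.
Qed.

Lemma sum_shift0 (R : rcfType) d (f : 'I_d -> R) : (0 < d)%N ->
  \sum_i f i = 1 -> \sum_i (f i - d%:R^-1) = 0.
Proof.
move=> d0 sf; rewrite sumrB sf sumr_const card_ord -(mulr_natr (d%:R^-1)).
have n0 : (d%:R : R) != 0 by rewrite pnatr_eq0 -lt0n.
by rewrite mulVf // subrr.
Qed.

Lemma core (R : rcfType) (d : nat) (r : 'I_d -> R) (p T : R) :
  (0 < d)%N -> \sum_i r i = 1 -> 0 < p -> T = \sum_i r i ^+ 2 ->
  let c := Num.sqrt ((d%:R - 1) / (d%:R * (p ^+ 2 + T) - 1)) in
  let sopt : 'rV[R]_d := \row_i (d%:R^-1 + c * (r i - d%:R^-1)) in
  [/\ feasible sopt,
      (forall s, feasible s -> objective r p s <= objective r p sopt),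
      (forall s, feasible s -> objective r p s = objective r p sopt -> s = sopt)
    & objective r p sopt
        = d%:R^-1 * (1 + Num.sqrt (d%:R - 1) * Num.sqrt (d%:R * (p ^+ 2 + T) - 1))].
Proof.
move=> d0 sr p0 hT c sopt.
set n : R := d%:R.
have n0 : 0 < n by rewrite ltr0n.
have n1 : 1 <= n by rewrite ler1n.
have nn0 : n != 0 by rewrite gt_eqF.
set y := fun i => r i - n^-1.
set Y := \sum_i y i ^+ 2.
have Y0 : 0 <= Y by apply: sumr_ge0 => i _; apply: sqr_ge0.
have hY : T = n^-1 + Y.
  rewrite hT /Y /y -(shift_sum d0 sr sr); apply: eq_bigr => i _; ring.
set V := Y + p ^+ 2.
have V0 : 0 < V by rewrite /V; nra.
have hD : n * (p ^+ 2 + T) - 1 = n * V by rewrite hY /V; field.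
have c0 : 0 <= c by apply: sqrtr_ge0.
have hc2 : c ^+ 2 * V = 1 - n^-1.
  rewrite /c hD sqr_sqrtr; last by apply: divr_ge0; [lra | nra].
  field; apply/andP; split; [exact: nn0 | by rewrite gt_eqF].
have sy : \sum_i y i = 0 by exact: sum_shift0.
have soptE : forall i, sopt 0 i = n^-1 + c * y i by move=> i; rewrite mxE.
have ssopt : \sum_i sopt 0 i = 1.
  under eq_bigr => i _ do rewrite soptE.
  rewrite big_split /= -mulr_sumr sy mulr0 addr0 sumr_const card_ord.
  by rewrite -(mulr_natr (n^-1)) mulVf.
have sqopt : 1 - \sum_i sopt 0 i ^+ 2 = (c * p) ^+ 2.
  have -> : \sum_i sopt 0 i ^+ 2 = n^-1 + c ^+ 2 * Y.
    rewrite (_ : \sum_i sopt 0 i ^+ 2 = \sum_i sopt 0 i * sopt 0 i); last first.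
      by apply: eq_bigr => i _; rewrite expr2.
    rewrite (shift_sum d0 ssopt ssopt) mulr_sumr; congr (_ + _).
    by apply: eq_bigr => i _; rewrite soptE; ring.
  rewrite (_ : 1 - (n^-1 + c ^+ 2 * Y) = (1 - n^-1) - c ^+ 2 * Y); last by ring.
  rewrite -hc2 /V; ring.
have qopt : Num.sqrt (1 - \sum_i sopt 0 i ^+ 2) = c * p.
  by rewrite sqopt sqrtr_sqr ger0_norm //; apply: mulr_ge0 => //; apply: ltW.
have objopt : objective r p sopt = n^-1 + c * V.
  rewrite /objective qopt (shift_sum d0 sr ssopt).
  rewrite (_ : \sum_i (r i - n^-1) * (sopt 0 i - n^-1) = c * Y).
    by rewrite /V; ring.
  rewrite /Y mulr_sumr; apply: eq_bigr => i _; rewrite soptE /y; ring.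
have key : forall s : 'rV[R]_d, feasible s ->
   let x := fun i => s 0 i - n^-1 in
   let q := Num.sqrt (1 - \sum_i s 0 i ^+ 2) in
   [/\ \sum_i x i ^+ 2 + q ^+ 2 = 1 - n^-1, 0 <= q &
       objective r p s = n^-1 + (\sum_i y i * x i + p * q)].
  move=> s [ss sq] x q; split.
  - rewrite /q sqr_sqrtr ?subr_ge0 //.
    have : \sum_i s 0 i * s 0 i = n^-1 + \sum_i x i ^+ 2.
      rewrite (shift_sum d0 ss ss); congr (_ + _); apply: eq_bigr => i _.
    rewrite (_ : \sum_i s 0 i * s 0 i = \sum_i s 0 i ^+ 2); last first.
      by apply: eq_bigr => i _; rewrite expr2.
    move=> ->; ring.
  - exact: sqrtr_ge0.
  - by rewrite /objective (shift_sum d0 sr ss) addrA.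
split.
- by split; [exact: ssopt | rewrite -subr_ge0 sqopt sqr_ge0].
- move=> s fs; have [hX q0 ->] := key s fs.
  rewrite objopt lerD2l.
  set x := fun i => s 0 i - n^-1.
  set q := Num.sqrt _.
  set L := \sum_i y i * x i + p * q.
  have := sq_exp (- L) V y x.
  move=> H.
  have H1 : 0 <= \sum_i (- L * y i + V * x i) ^+ 2 + (- L * p + V * q) ^+ 2.
    by apply: addr_ge0; [apply: sumr_ge0 => i _; apply: sqr_ge0 | apply: sqr_ge0].
  rewrite H in H1.
  have H2 : L ^+ 2 <= (c * V) ^+ 2.
    rewrite (_ : (c * V) ^+ 2 = (c ^+ 2 * V) * V); last by ring.
    rewrite hc2 -hX.
    rewrite -/Y in H1.
    have e : (- L) ^+ 2 * Y + 2 * - L * V * (\sum_i y i * x i) +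
       V ^+ 2 * (\sum_i x i ^+ 2) + (- L * p + V * q) ^+ 2
       = V * (V * (\sum_i x i ^+ 2 + q ^+ 2) - L ^+ 2).
      by rewrite /L /V; ring.
    rewrite e pmulr_rge0 // subr_ge0 in H1.
    by rewrite mulrC.
  have cV0 : 0 <= c * V by apply: mulr_ge0 => //; apply: ltW.
  nra.
- move=> s fs; have [hX q0 ->] := key s fs.
  rewrite objopt => /addrI HL.
  pose x := fun i => s 0 i - n^-1.
  pose q := Num.sqrt (1 - \sum_i s 0 i ^+ 2).
  have HL' : \sum_i y i * x i + p * q = c * V := HL.
  have hX' : \sum_i x i ^+ 2 + q ^+ 2 = 1 - n^-1 := hX.
  clear HL hX.
  have H := sq_exp (- c) 1 y x.
  have H0 : \sum_i (- c * y i + 1 * x i) ^+ 2 + (- c * p + 1 * q) ^+ 2 = 0.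
    rewrite H -/Y.
    have -> : \sum_i y i * x i = c * V - p * q by rewrite -HL'; ring.
    rewrite -hc2 in hX'.
    rewrite /V in hX' *.
    rewrite (_ : \sum_i x i ^+ 2 = c ^+ 2 * (Y + p ^+ 2) - q ^+ 2); last by rewrite -hX'; ring.
    ring.
  have S0 : 0 <= \sum_i (- c * y i + 1 * x i) ^+ 2.
    by apply: sumr_ge0 => i _; apply: sqr_ge0.
  have S1 := sqr_ge0 (- c * p + 1 * q).
  have S2 : \sum_i (- c * y i + 1 * x i) ^+ 2 == 0 by apply/eqP; lra.
  move: S2; rewrite psumr_eq0; last by move=> i _; apply: sqr_ge0.
  move/allP => Hall; apply/rowP => i.
  have := Hall i (mem_index_enum i); rewrite /= sqrf_eq0 => /eqP e.
  rewrite soptE; move: e; rewrite /x /y; lra.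
- rewrite objopt [RHS]mulrDr mulr1; congr (_ + _).
  rewrite -sqrtrM; last lra.
  have e1 : 0 <= (n - 1) * (n * (p ^+ 2 + T) - 1) by rewrite hD; apply: mulr_ge0; nra.
  apply/eqP; rewrite -(@eqrXn2 _ 2) //; last first.
    by apply: mulr_ge0; [rewrite invr_ge0; apply: ltW | apply: sqrtr_ge0].
    by apply: mulr_ge0 => //; apply: ltW.
  rewrite (_ : (c * V) ^+ 2 = (c ^+ 2 * V) * V); last by ring.
  rewrite hc2 exprMn (sqr_sqrtr e1) hD; apply/eqP; field; exact: nn0.
Qed.



Section M.
Variables (R : rcfType) (d : nat) (b : 'I_d -> 'cV[R[i]]_d).
Hypothesis hb : forall i j, adjmx (b i) *m b j = (i == j)%:R%:M.
Let P i := b i *m adjmx (b i).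

Lemma PP i j : P i *m P j = (i == j)%:R *: P i.
Proof.
rewrite /P mulmxA -(mulmxA (b i)) hb mul_mx_scalar -scalemxAl.
by case: (eqVneq i j) => [-> | _] //; rewrite !scale0r.
Qed.

Lemma trP i : \tr (P i) = 1.
Proof. by rewrite /P mxtrace_mulC hb eqxx mxtrace_scalar. Qed.

Lemma complete : \sum_i P i = 1%:M.
Proof.
pose B : 'M[R[i]]_d := \matrix_(j, i) b i j 0.
have h1 : adjmx B *m B = 1%:M.
  apply/matrixP => i k; rewrite !mxE.
  move: (hb i k) => /matrixP /(_ 0 0); rewrite !mxE eqxx mulr1n => <-.
  by apply: eq_bigr => j _; rewrite !mxE.
rewrite -(mulmx1C h1); apply/matrixP => j l; rewrite summxE !mxE.
by apply: eq_bigr => i _; rewrite /P !mxE big_ord1 !mxE.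
Qed.
End M.

Lemma tr_sum (K : fieldType) (n k : nat) (F : 'I_k -> 'M[K]_n) :
  \tr (\sum_i F i) = \sum_i \tr (F i).
Proof. by apply: big_morph; [exact: mxtraceD | exact: mxtrace0]. Qed.

Unset Implicit Arguments.

Theorem lemma2 (R : rcfType) (d : nat) (rho : 'M[R[i]]_d)
    (r : 'I_d -> R) (b : 'I_d -> 'cV[R[i]]_d) (p : R) :
  (0 < d)%N ->
  density rho ->
  (forall i j, adjmx (b i) *m b j = (i == j)%:R%:M) ->
  rho = \sum_i ((r i)%:C)%C *: (b i *m adjmx (b i)) ->
  0 < p ->
  let T := complex.Re (\tr (rho *m rho)) in
  let c := Num.sqrt ((d%:R - 1) / (d%:R * (p ^+ 2 + T) - 1)) in
  let sopt : 'rV[R]_d := \row_i (d%:R^-1 + c * (r i - d%:R^-1)) in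
  [/\ feasible sopt,
      (forall s, feasible s -> objective r p s <= objective r p sopt),
      (forall s, feasible s -> objective r p s = objective r p sopt -> s = sopt),
      objective r p sopt
        = d%:R^-1 * (1 + Num.sqrt (d%:R - 1) * Num.sqrt (d%:R * (p ^+ 2 + T) - 1))
    & \sum_i ((sopt 0 i)%:C)%C *: (b i *m adjmx (b i))
        = (d%:R^-1)%:M + (c%:C)%C *: (rho - (d%:R^-1)%:M)].
Proof.
move=> d0 [_ _ tr1] hb hrho p0 T c sopt.
have sr : \sum_i r i = 1.
  have : \tr rho = ((\sum_i r i)%:C)%C.
    rewrite hrho tr_sum rmorph_sum; apply: eq_bigr => i _.
    by rewrite mxtraceZ (trP hb) mulr1.
  by rewrite tr1 => /(congr1 (@complex.Re R)) /= <-.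
have hT : T = \sum_i r i ^+ 2.
  rewrite /T (_ : \tr (rho *m rho) = ((\sum_i r i ^+ 2)%:C)%C) //.
  rewrite {1}hrho mulmx_suml tr_sum rmorph_sum; apply: eq_bigr => i _.
  rewrite -scalemxAl mxtraceZ hrho mulmx_sumr tr_sum.
  under eq_bigr => j _ do rewrite -scalemxAr mxtraceZ (PP hb) mxtraceZ (trP hb) mulr1.
  rewrite (bigD1 i) //= eqxx mulr1 big1 => [|j nji]; last first.
    by rewrite eq_sym (negbTE nji) mulr0.
  by rewrite addr0 -rmorphM expr2.
have [h1 h2 h3 h4] := core d0 sr p0 hT.
split; [exact: h1 | exact: h2 | exact: h3 | exact: h4 | ].
rewrite hrho -[(_^-1)%:M]scalemx1 -(complete hb) !scaler_sumr -sumrB scaler_sumr -big_split /=.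
apply: eq_bigr => i _; rewrite mxE -scalerBl scalerA -scalerDl; congr (_ *: _).
by rewrite rmorphD rmorphM rmorphB fmorphV rmorph_nat.
Qed.
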